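(* Let $Q,K,L\subset\mathbb R^d$ be compact with $K\subset L$, equip $C(Q\oplus L)$ and $C(K)$ with supremum norms, and let $B\subset C(K)$ be a Borel set. Define $$C_B=\Big\{f\in C(Q\oplus L):\ \frac{f(\tau_Q(f|_Q)+\cdot)}{f(\tau_Q(f|_Q))}\Big|_K\in B\Big\},$$ $$C_B^*=\Big\{f\in C(Q\oplus L):\ \operatorname{argmax}_{t\in Q}f(t)\text{ is unique},\ \frac{f(\tau_Q(f|_Q)+\cdot)}{f(\tau_Q(f|_Q))}\Big|_K\in B^\circ\Big\},$$ where membership requires the quotient to be defined. Then $C_B^*$ is contained in the interior of $C_B$.
   Context: $C(U)$ denotes non-negative continuous functions on $U$; $Q\oplus L=\{q+l:q\in Q,l\in L\}$; $B^\circ$ is the interior of $B$ in $C(K)$; $\tau_Q(f)=\inf(\operatorname{argmax}_{t\in Q}f(t))$ with infimum in lexicographic order. *)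

(* Defs.v *)
From HB Require Import structures.
From mathcomp Require Import all_boot all_order all_algebra.
From mathcomp Require Import all_classical all_reals all_analysis.
Set Implicit Arguments. Unset Strict Implicit. Unset Printing Implicit Defensive.
Import Order.TTheory GRing.Theory Num.Theory.
Import numFieldNormedType.Exports.
Local Open Scope classical_set_scope.
Local Open Scope ring_scope.

Section Defs.
Variables (R : realType) (d : nat).
Notation pt := 'rV[R]_d.

Definition minksum (Q L : set pt) : set pt :=
  [set z | exists q l, Q q /\ L l /\ z = q + l].

(* C(U): non-negative continuous functions on U.  An element is represented
   canonically by a total function that vanishes outside U. *)
Definition Cnn (U : set pt) : set (pt -> R) :=
  [set f : pt -> R | (forall x, ~ U x -> f x = 0) /\ {within U, continuous f} /\
           (forall x, U x -> 0 <= f x)].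

Definition supdist (U : set pt) (f g : pt -> R) : R :=
  sup [set `|f x - g x| | x in U].

Definition Cinterior (U : set pt) (A : set (pt -> R)) : set (pt -> R) :=
  [set f : pt -> R | Cnn U f /\ A f /\ exists e : R, 0 < e /\
     forall g, Cnn U g -> supdist U f g < e -> A g].

Definition Copen (U : set pt) (A : set (pt -> R)) : Prop :=
  A `<=` Cnn U /\ A `<=` Cinterior U A.

Definition CBorel (U : set pt) (B : set (pt -> R)) : Prop :=
  B `<=` Cnn U /\ (<<s Cnn U, [set A | Copen U A] >>) B.

Definition lexle (u v : pt) : Prop :=
  u = v \/ exists i : 'I_d,
    (forall j : 'I_d, (j < i)%N -> u ord0 j = v ord0 j) /\ u ord0 i < v ord0 i.

Definition lexinf (S : set pt) (t : pt) : Prop :=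
  (forall s, S s -> lexle t s) /\
  (forall u, (forall s, S s -> lexle u s) -> lexle u t).

Definition argmax (Q : set pt) (f : pt -> R) : set pt :=
  [set t | Q t /\ forall s, Q s -> f s <= f t].

(* f(tau + .)/f(tau) restricted to K (canonical representative: 0 off K) *)
Definition shiftnorm (K : set pt) (f : pt -> R) (tau : pt) : pt -> R :=
  fun x => if x \in K then f (tau + x) / f tau else 0.

(* "the quotient is defined": f|_Q is defined (Q lies in the domain Q(+)L),
   tau = tau_Q(f|_Q) exists, and f(tau) <> 0. *)
Definition C_B (Q K L : set pt) (B : set (pt -> R)) : set (pt -> R) :=
  [set f : pt -> R | Cnn (minksum Q L) f /\ Q `<=` minksum Q L /\
     exists tau, lexinf (argmax Q f) tau /\ f tau != 0 /\
       B (shiftnorm K f tau)].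

Definition C_B_star (Q K L : set pt) (B : set (pt -> R)) : set (pt -> R) :=
  [set f : pt -> R | Cnn (minksum Q L) f /\ Q `<=` minksum Q L /\
     (exists t, argmax Q f = [set t]) /\
     exists tau, lexinf (argmax Q f) tau /\ f tau != 0 /\
       Cinterior K B (shiftnorm K f tau)].

End Defs.

(* Main.v *)
Require Import Defs.
From HB Require Import structures.
From mathcomp Require Import all_boot all_order all_algebra.
From mathcomp Require Import all_classical all_reals all_analysis.
From mathcomp Require Import ring lra.
Import Order.TTheory GRing.Theory Num.Theory.
Import numFieldNormedType.Exports.
Local Open Scope classical_set_scope.
Local Open Scope ring_scope.
Section KI.
Context {R : realType}.
Lemma key_ineq (A b p q Mf eps e0 : R) : 0 < A -> A / 2 <= b -> 0 <= p -> p <= Mf ->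
  `|b - A| <= eps -> `|p - q| <= 2 * eps -> eps * (4 * (Mf + 2 * A)) <= e0 * (A * A) ->
  `|p / A - q / b| <= e0 / 2.
Proof.
move=> A0 Ab p0 pM bA pq he.
have b0 : 0 < b by apply: lt_le_trans Ab; rewrite divr_gt0.
have -> : p / A - q / b = (p * (b - A) + A * (p - q)) / (A * b).
  by field; apply/andP; split; rewrite gt_eqF.
rewrite normrM normfV (gtr0_norm (mulr_gt0 A0 b0)) ler_pdivrMr ?mulr_gt0 //.
apply: le_trans (ler_normD _ _) _.
rewrite !normrM (ger0_norm p0) (gtr0_norm A0).
have e0' : 0 <= eps by apply: le_trans bA.
have h1 : p * `|b - A| <= Mf * eps by apply: ler_pM.
have h2 : A * `|p - q| <= A * (2 * eps) by apply: ler_wpM2l; [exact: ltW|].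
have h3 : A * (A / 2) <= A * b by apply: ler_wpM2l; [exact: ltW|].
have h4 : 0 <= e0.
  have : 0 <= eps * (4 * (Mf + 2 * A)).
    by apply: mulr_ge0 => //; apply: mulr_ge0 => //; apply: addr_ge0; [exact: le_trans pM| exact: mulr_ge0 (ltW _)].
  move=> h; have : 0 <= e0 * (A * A) by apply: le_trans h he.
  by rewrite pmulr_lge0 // mulr_gt0.
have h5 : e0 / 2 * (A * (A / 2)) <= e0 / 2 * (A * b) by apply: ler_wpM2l => //; rewrite divr_ge0.
nra.
Qed.
End KI.

Section H.
Context {R : realType} {d : nat}.
Local Notation pt := 'rV[R]_d.
Lemma lexle_refl (u : pt) : lexle u u.
Proof. by left. Qed.

Lemma lexle_anti (u v : pt) : lexle u v -> lexle v u -> u = v.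
Proof.
case=> [->//|[i [Hi1 Hi2]]]; case=> [->//|[j [Hj1 Hj2]]].
exfalso; have [ij|ji|ij] := ltngtP i j.
- by move: Hi2; rewrite (Hj1 i ij) ltxx.
- by move: Hj2; rewrite (Hi1 j ji) ltxx.
- have eij : i = j by apply: val_inj.
  by subst j; move: (lt_trans Hi2 Hj2); rewrite ltxx.
Qed.

Lemma lexmin (S : set pt) : compact S -> S !=set0 ->
  exists2 m, S m & forall s, S s -> lexle m s.
Proof.
suff H : forall n (S : set pt), compact S -> S !=set0 ->
  (forall s s', S s -> S s' -> forall j : 'I_d, (j < d - n)%N -> s ord0 j = s' ord0 j) ->
  exists2 m, S m & forall s, S s -> lexle m s.
  move=> cS S0; apply: (H d S cS S0) => s s' _ _ j; by rewrite subnn.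
elim=> [|n IH] {}S cS [m0 Sm0] Hag.
  exists m0 => // s Ss; left; apply/rowP => j.
  by rewrite (Hag m0 s Sm0 Ss j) // subn0.
have [dn|nd] := leqP d n.
  apply: IH => //; first by exists m0.
  move=> s s' Ss Ss' j; rewrite (_ : d - n = 0)%N //; apply/eqP; rewrite subn_eq0 //.
have kd : (d - n.+1 < d)%N by rewrite ltn_subrL /=; exact: (leq_ltn_trans (leq0n n) nd).
pose i := Ordinal kd.
have ci : {within S, continuous (fun s : pt => s ord0 i)}.
  by apply: continuous_subspaceT => x ?; exact: coord_continuous.
have [c Sc cmin] := compact_EVT_min (ex_intro _ m0 Sm0) cS ci.
pose S' := S `&` [set s : pt | s ord0 i = c ord0 i].
have cS' : compact S'.
  apply: compact_closedI => //.
  have := @closed_eq R (c ord0 i).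
  move/(proj1 (continuous_closedP (fun s : pt => s ord0 i)) (@coord_continuous R 1 d ord0 i)).
  by [].
have [m [Sm mi] Hm] : exists2 m, S' m & forall s, S' s -> lexle m s.
  apply: IH => //.
    by exists c; split=> //; rewrite inE in Sc.
  move=> s s' [Ss si] [Ss' s'i] j.
  rewrite -(subnSK nd) ltnS leq_eqVlt => /orP [/eqP ej|jl].
    have -> : j = i by apply: val_inj.
    by rewrite si s'i.
  exact: Hag.
exists m => // s Ss.
have [si|si] := eqVneq (s ord0 i) (c ord0 i).
  by apply: Hm; split.
right; exists i; split.
  move=> j ji; apply: Hag => //.
rewrite mi lt_neqAle eq_sym si /=; apply: cmin; rewrite inE //.
Qed.
Lemma minksum_compact (Q L : set pt) : compact Q -> compact L -> compact (minksum Q L).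
Proof.
move=> cQ cL.
have -> : minksum Q L = (fun p : pt * pt => p.1 + p.2) @` (Q `*` L).
  apply/seteqP; split=> z.
    by case=> q [l [Qq [Ll ->]]]; exists (q, l).
  by case=> [[q l]] [/= Qq Ll] <-; exists q, l.
apply: continuous_compact; last exact: compact_setX.
apply: continuous_subspaceT => x ?; exact: add_continuous.
Qed.
Lemma within_epsP (U : set pt) (f : pt -> R) :
  {within U, continuous f} <->
  (forall x, U x -> forall e, 0 < e -> exists2 r, 0 < r &
     forall y, U y -> `|x - y| < r -> `|f x - f y| < e).
Proof.
rewrite subspace_continuousP; split.
- move=> H x Ux e e0.
  have /cvgrPdist_lt /(_ e e0) := H x Ux.
  rewrite /within /= => /nbhs_ballP [r r0 Hr].
  exists r => // y Uy xy; apply: (Hr y) => //.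
  by rewrite -ball_normE /=.
- move=> H x Ux; apply/cvgrPdist_lt => e e0.
  have [r r0 Hr] := H x Ux e e0.
  rewrite /within /=; apply/nbhs_ballP; exists r => // y.
  rewrite -ball_normE /= => xy Uy; exact: Hr.
Qed.

Lemma shift_unif (U Q K : set pt) (f : pt -> R) (t : pt) :
  compact K -> {within U, continuous f} -> Q t ->
  (forall s x, Q s -> K x -> U (s + x)) ->
  forall eta, 0 < eta -> exists2 r, 0 < r & forall s, Q s -> `|t - s| < r ->
     forall x, K x -> `|f (t + x) - f (s + x)| < eta.
Proof.
move=> cK cf Qt QKU eta eta0.
have NC := proj2 (near_covering_withinP K) (proj1 (compact_near_coveringP K) cK).
have /nbhs_ballP [r r0 Hr0] : nbhs t (fun s => forall x, K x -> Q s -> `|f (t + x) - f (s + x)| < eta).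
  apply: (NC pt (nbhs t) (fun s x => Q s -> `|f (t + x) - f (s + x)| < eta)).
  move=> x Kx.
  have [r r0 Hr] := proj1 (within_epsP U f) cf (t + x) (QKU t x Qt Kx) (eta / 2) ltac:(by rewrite divr_gt0).
  exists (ball x (r/2), ball t (r/2)).
    by split=> /=; apply: nbhsx_ballx; rewrite divr_gt0.
  case=> x' i [/= bx bi] Kx' Qi.
  rewrite -ball_normE /= in bx bi.
  have h1 : `|f (t + x) - f (t + x')| < eta / 2.
    apply: Hr; first exact: QKU.
    by rewrite opprD addrACA subrr add0r; lra.
  have h2 : `|f (t + x) - f (i + x')| < eta / 2.
    apply: Hr; first exact: QKU.
    rewrite opprD addrACA; apply: le_lt_trans (ler_normD _ _) _; lra.
  rewrite (_ : f (t + x') - f (i + x') = (f (t + x) - f (i + x')) - (f (t + x) - f (t + x'))); last by ring.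
  apply: le_lt_trans (ler_normB _ _) _; lra.
exists r => // s Qs ts x Kx; apply: Hr0 => //.
by rewrite -ball_normE /=.
Qed.

Lemma argmax_loc (Q : set pt) (f : pt -> R) t : compact Q ->
  {within Q, continuous f} -> argmax Q f = [set t] ->
  forall del, 0 < del -> exists2 eps, 0 < eps & forall g : pt -> R,
   (forall y, Q y -> `|f y - g y| < eps) -> forall s, argmax Q g s -> `|t - s| < del.
Proof.
move=> cQ cf amf del del0.
have [Qt ft] : argmax Q f t by rewrite amf.
pose A := Q `&` ~` ball t del.
have cA : compact A by apply: compact_closedI => //; rewrite closedC; exact: ball_open.
have [[a Aa]|A0] := pselect (exists a, A a); last first.
  exists 1 => // g _ s [Qs _]; rewrite ltNge; apply/negP => ds.
  apply: A0; exists s; split => //; rewrite -ball_normE /= => h.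
  by move: (lt_le_trans h ds); rewrite ltxx.
have cfA : {within A, continuous f} by apply: continuous_subspaceW cf; apply: subIsetl.
have [c Ac cmax] := compact_EVT_max (ex_intro _ a Aa) cA cfA.
rewrite inE in Ac; case: (Ac) => Qc nbc.
have fct : f c < f t.
  rewrite lt_neqAle ft // andbT; apply/negP => /eqP fct.
  have : argmax Q f c by split => // s Qs; rewrite fct; exact: ft.
  rewrite amf /= => ect; apply: nbc; rewrite ect; exact: ballxx.
exists ((f t - f c) / 2); first by rewrite divr_gt0 // subr_gt0.
move=> g Hg s [Qs gs]; rewrite ltNge; apply/negP => ds.
have As : A s by split => //; rewrite -ball_normE /= => h; move: (lt_le_trans h ds); rewrite ltxx.
have h1 := Hg s Qs; have h2 := Hg t Qt; have h3 := gs t Qt.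
have h4 : f s <= f c by apply: cmax; rewrite inE.
move: h1 h2; rewrite !ltr_norml => /andP [h1a h1b] /andP [h2a h2b].
clear -h1a h1b h2a h2b h3 h4; lra.
Qed.

Lemma argmax_compact (Q : set pt) (g : pt -> R) : compact Q ->
  {within Q, continuous g} -> Q !=set0 ->
  compact (argmax Q g) /\ argmax Q g !=set0.
Proof.
move=> cQ cg Q0.
have [c Qc cmax] := compact_EVT_max Q0 cQ cg.
rewrite inE in Qc.
have -> : argmax Q g = [set s | g c <= g s] `&` Q.
  apply/seteqP; split=> s.
    by case=> Qs Hs; split => //; apply: Hs.
  by case=> /= cs Qs; split => // s' Qs'; apply: le_trans cs; apply: cmax; rewrite inE.
split; last by exists c; rewrite /setI /=; split.
apply: (proj1 (compact_subspaceIP Q _)).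
rewrite setIC; apply: compact_closedI.
  have := proj2 (compact_subspaceIP Q Q); rewrite setIid; apply; exact: cQ.
have := proj1 (continuous_closedP (from_subspace Q g)) cg _ (@closed_ge R (g c)).
by [].
Qed.
End H.

Theorem lemmaA2 (R : realType) (d : nat) (Q K L : set 'rV[R]_d)
  (B : set ('rV[R]_d -> R)) :
  compact Q -> compact K -> compact L -> K `<=` L ->
  CBorel K B ->
  C_B_star Q K L B `<=` Cinterior (minksum Q L) (C_B Q K L B).
Proof.
move=> cQ cK cL KL _ f [Cf [QU [[t amf] [tau [ltau [ftau0 Hint]]]]]].
have Et : tau = t.
  rewrite amf in ltau; case: ltau => lb glb.
  apply: lexle_anti; first exact: lb.
  by apply: glb => s ->; exact: lexle_refl.
subst tau.
set U := minksum Q L in Cf QU *.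
case: (Cf) => [f0 [cf fpos]].
case: Hint => [Chf [Bhf [e0 [e00 He0]]]].
have [Qt ft] : argmax Q f t by rewrite amf.
have Ut : U t := QU t Qt.
have A0 : 0 < f t by rewrite lt_neqAle eq_sym ftau0 fpos.
have cU : compact U by apply: minksum_compact.
have [c1 Uc1 c1max] := compact_EVT_max (ex_intro _ t Ut) cU cf.
rewrite inE in Uc1.
have fM : forall y, U y -> f y <= f c1 by move=> y Uy; apply: c1max; rewrite inE.
set Mf := f c1.
have Mf0 : 0 <= Mf := fpos c1 Uc1.
have QKU : forall s x, Q s -> K x -> U (s + x).
  by move=> s x Qs Kx; exists s, x; split=> //; split=> //; exact: KL.
pose eps := Num.min (f t / 2) (e0 * (f t * f t) / (4 * (Mf + 2 * f t))).
have Mpos : 0 < 4 * (Mf + 2 * f t) by apply: mulr_gt0 => //; apply: ltr_wpDl => //; rewrite mulr_gt0.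
have eps0 : 0 < eps by rewrite lt_min !divr_gt0 // ?mulr_gt0.
have epsA : eps <= f t / 2 by rewrite ge_min lexx.
have epsM : eps * (4 * (Mf + 2 * f t)) <= e0 * (f t * f t).
  by rewrite -ler_pdivlMr // ge_min lexx orbT.
have [del del0 Hdel] := shift_unif _ _ _ _ _ cK cf Qt QKU _ eps0.
have cfQ : {within Q, continuous f} by apply: continuous_subspaceW cf.
have [e1 e10 He1] := argmax_loc _ _ _ cQ cfQ amf _ del0.
split; first exact: Cf.
split.
  split=> //; split=> //.
  exists t; split; first by rewrite amf; split=> [s ->|u Hu]; [exact: lexle_refl|exact: Hu].
  by split.
exists (Num.min eps e1); split; first by rewrite lt_min eps0.
move=> g [g0 [cg gpos]] sfg.
have [c2 Uc2 c2max] := compact_EVT_max (ex_intro _ t Ut) cU cg.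
rewrite inE in Uc2.
have hsup : has_sup [set `|f x - g x| | x in U].
  split; first by exists `|f t - g t|, t.
  exists (f c1 + g c2) => _ [y Uy <-].
  have gy : g y <= g c2 by apply: c2max; rewrite inE.
  have := fpos y Uy; have := gpos y Uy; have := fM y Uy => h1 h2 h3.
  rewrite ler_norml; apply/andP; split; lra.
have close : forall y, U y -> `|f y - g y| < Num.min eps e1.
  move=> y Uy; apply: le_lt_trans sfg.
  by apply: sup_upper_bound => //; exists y.
have closeQ : forall y, Q y -> `|f y - g y| < e1.
  by move=> y Qy; apply: lt_le_trans (close y (QU y Qy)) _; rewrite ge_min lexx orbT.
have close1 : forall y, U y -> `|f y - g y| < eps.
  by move=> y Uy; apply: lt_le_trans (close y Uy) _; rewrite ge_min lexx.
have cgQ : {within Q, continuous g} by apply: continuous_subspaceW cg.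
have [cam am0] := argmax_compact _ _ cQ cgQ (ex_intro _ t Qt).
have [m [Qm gm] Hm] := lexmin _ cam am0.
have tm : `|t - m| < del by apply: (He1 g closeQ); split.
have gmt : g t <= g m := gm t Qt.
have fmt : f m <= f t := ft m Qm.
have h1 := close1 t Ut; have h2 := close1 m (QU m Qm).
move: h1 h2; rewrite !ltr_norml => /andP [h1a h1b] /andP [h2a h2b].
have gmA : f t / 2 <= g m by lra.
have gm0 : 0 < g m by apply: lt_le_trans gmA; rewrite divr_gt0.
split=> //; split=> //.
exists m; split.
  split; first exact: Hm.
  by move=> u Hu; apply: Hu; split.
split; first by rewrite gt_eqF.
apply: He0.
- split.
    by move=> x Kx; rewrite /shiftnorm ifF //; apply/negP; rewrite inE.
  split; last first.
    move=> x Kx; rewrite /shiftnorm ifT ?inE //.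
    by apply: divr_ge0; [exact: (gpos _ (QKU m x Qm Kx)) | exact: ltW].
  apply/within_epsP => x Kx e' e'0.
  have [r r0 Hr] := proj1 (within_epsP U g) cg (m + x) (QKU m x Qm Kx) (e' * g m) (mulr_gt0 e'0 gm0).
  exists r => // y Ky xy.
  rewrite /shiftnorm !ifT ?inE // -mulrBl normrM normfV (gtr0_norm gm0) ltr_pdivrMr //.
  apply: Hr; first exact: (QKU m y Qm Ky).
  by rewrite opprD addrACA subrr add0r.
- rewrite /supdist.
  have [[x0 Kx0]|K0] := pselect (exists x, K x); last first.
    have -> : [set `|shiftnorm K f t x - shiftnorm K g m x| | x in K] = set0.
      by apply/seteqP; split=> // y [x Kx _]; exfalso; apply: K0; exists x.
    by rewrite sup0.
  apply: (@le_lt_trans _ _ (e0 / 2)); last by clear -e00; lra.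
  apply: ge_sup; first by exists `|shiftnorm K f t x0 - shiftnorm K g m x0|, x0.
  move=> _ [x Kx <-]; rewrite /shiftnorm !ifT ?inE //.
  apply: (@key_ineq R _ _ _ _ Mf eps) => //.
  + exact: fpos (QKU t x Qt Kx).
  + exact: fM (QKU t x Qt Kx).
  + rewrite ler_norml; apply/andP; split; clear -h1a h1b h2a h2b gmt fmt; lra.
  + have k1 := Hdel m Qm tm x Kx.
    have k2 := close1 (m + x) (QKU m x Qm Kx).
    rewrite (_ : f (t + x) - g (m + x) = (f (t + x) - f (m + x)) + (f (m + x) - g (m + x))); last by ring.
    apply: le_trans (ler_normD _ _) _.
    clear -k1 k2; lra.
Qed.
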